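(* Let $\mathcal{H}$ be a connected $Moor$-bialgebra. Then $\mathcal{H}$ is generated, as a $Moor$-algebra, by its primitive elements $\ker\Delta$. Moreover, $\ker\Delta=\mathcal{H}_1$.
   Context: $K$ is a field of characteristic zero; $\tau$ is the flip map. A $Moor$-bialgebra is a graded vector space $\mathcal{H}=\bigoplus_{p>0}\mathcal{H}_p$ with a bilinear operation $\prec$ satisfying $\mathcal{H}_p\prec\mathcal{H}_q\subseteq\mathcal{H}_{p+q}$, $(x\prec y)\prec z=(x\prec z)\prec y$ and $x\prec(y\prec z)=0$, together with a linear map $\Delta:\mathcal{H}\to\mathcal{H}\otimes\mathcal{H}$ (Sweedler notation $\Delta(x)=x_{(1)}\otimes x_{(2)}$) satisfying $(\mathrm{id}\otimes\Delta)\Delta=0$, $(\Delta\otimes\mathrm{id})\Delta=(\mathrm{id}\otimes\tau)(\Delta\otimes\mathrm{id})\Delta$, and $\Delta(x\prec y)=x\otimes e(y)+(x_{(1)}\prec y)\otimes x_{(2)}$ for all $x,y$, where $e:\mathcal{H}\to\mathcal{H}_1$ is the canonical projection. Primitive elements are the elements of $\ker\Delta$. Set $\Delta^{(1)}=\Delta$ and $\Delta^{(r)}=(\Delta\otimes\mathrm{id}^{\otimes(r-1)})\Delta^{(r-1)}$. The $Moor$-bialgebra is connected if $\ker\Delta\subseteq\mathcal{H}_1$ and $\mathcal{H}=\bigcup_{r\geq 1}\ker\Delta^{(r)}$. *)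

(* Defs.v *)
From HB Require Import structures.
From mathcomp Require Import all_boot all_order all_algebra.
Set Implicit Arguments.
Unset Strict Implicit.
Unset Printing Implicit Defensive.
Import GRing.Theory.
Local Open Scope ring_scope.

(* Convention: an element of the n-fold tensor power
   H^{(x) n} is represented by a finite list of n-lists [a_1;...;a_n],
   standing for the sum of the pure tensors a_1 (x) ... (x) a_n.
   Two such representatives denote the same tensor iff they agree under
   every family of linear functionals f_1,...,f_n : H -> K
   (sum of f_1(a_1)...f_n(a_n)); over a field this is exactly equality
   in the tensor product. *)

Section Moor.
Variables (K : fieldType) (H : lmodType K).

Definition tensor := seq (seq H).

Definition tens_eval (fs : nat -> {scalar H}) (s : tensor) : K :=
  \sum_(t <- s) \prod_(i < size t) fs i (nth 0 t i).

Definition tensor_eq (s t : tensor) : Prop :=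
  forall fs : nat -> {scalar H}, tens_eval fs s = tens_eval fs t.

Definition tens2 (s : seq (H * H)) : tensor := [seq [:: p.1; p.2] | p <- s].

(* Graded vector space H = (+)_{p>0} H_p, encoded by the family of
   canonical projections pr p : H -> H_p. *)
Definition graded (pr : nat -> {linear H -> H}) : Prop :=
  [/\ (forall p q x, pr p (pr q x) = if p == q then pr p x else 0),
      (forall x, pr 0 x = 0) &
      (forall x, exists N, x = \sum_(p < N) pr p x)].

Definition homog (pr : nat -> {linear H -> H}) (p : nat) (x : H) : Prop :=
  pr p x = x.

Definition moor_algebra (pr : nat -> {linear H -> H}) (prec : H -> H -> H) : Prop :=
  [/\ (forall a x y z, prec (a *: x + y) z = a *: prec x z + prec y z),
      (forall a x y z, prec z (a *: x + y) = a *: prec z x + prec z y),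
      (forall p q x y, homog pr p x -> homog pr q y -> homog pr (p + q) (prec x y)),
      (forall x y z, prec (prec x y) z = prec (prec x z) y) &
      (forall x y z, prec x (prec y z) = 0)].

Definition delta_linear (Delta : H -> seq (H * H)) : Prop :=
  forall a x y, tensor_eq (tens2 (Delta (a *: x + y)))
    ([seq [:: a *: p.1; p.2] | p <- Delta x] ++ tens2 (Delta y)).

(* (id (x) Delta) Delta x *)
Definition id_delta_delta (Delta : H -> seq (H * H)) (x : H) : tensor :=
  [seq [:: p.1; q.1; q.2] | p <- Delta x, q <- Delta p.2].

(* (Delta (x) id) Delta x *)
Definition delta_id_delta (Delta : H -> seq (H * H)) (x : H) : tensor :=
  [seq [:: q.1; q.2; p.2] | p <- Delta x, q <- Delta p.1].

(* (id (x) tau) (Delta (x) id) Delta x *)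
Definition flip_delta_id_delta (Delta : H -> seq (H * H)) (x : H) : tensor :=
  [seq [:: q.1; p.2; q.2] | p <- Delta x, q <- Delta p.1].

Definition moor_bialgebra (pr : nat -> {linear H -> H}) (prec : H -> H -> H)
    (Delta : H -> seq (H * H)) : Prop :=
  [/\ graded pr, moor_algebra pr prec, delta_linear Delta &
    [/\ (forall x, tensor_eq (id_delta_delta Delta x) [::]),
      (forall x, tensor_eq (delta_id_delta Delta x) (flip_delta_id_delta Delta x)) &
      (forall x y, tensor_eq (tens2 (Delta (prec x y)))
          ([:: [:: x; pr 1%N y]] ++ [seq [:: prec p.1 y; p.2] | p <- Delta x]))]].

Definition primitive (Delta : H -> seq (H * H)) (x : H) : Prop :=
  tensor_eq (tens2 (Delta x)) [::].

(* Delta^{(r)} x as an (r+1)-tensor; Delta^{(0)} = id, Delta^{(1)} = Delta,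
   Delta^{(r)} = (Delta (x) id^{(x)(r-1)}) Delta^{(r-1)} *)
Fixpoint iter_delta (Delta : H -> seq (H * H)) (r : nat) (x : H) : tensor :=
  match r with
  | 0 => [:: [:: x]]
  | r'.+1 => [seq q.1 :: q.2 :: behead t | t <- iter_delta Delta r' x,
                                           q <- Delta (head 0 t)]
  end.

Definition connected (pr : nat -> {linear H -> H}) (Delta : H -> seq (H * H)) : Prop :=
  (forall x, primitive Delta x -> homog pr 1 x) /\
  (forall x, exists2 r, (1 <= r)%N & tensor_eq (iter_delta Delta r x) [::]).

Inductive moor_gen (prec : H -> H -> H) (S : H -> Prop) : H -> Prop :=
| mg_base x : S x -> moor_gen prec S x
| mg_zero : moor_gen prec S 0
| mg_lin a x y : moor_gen prec S x -> moor_gen prec S y -> moor_gen prec S (a *: x + y)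
| mg_prec x y : moor_gen prec S x -> moor_gen prec S y -> moor_gen prec S (prec x y).

End Moor.

(* Main.v *)
Require Import Defs.
From HB Require Import structures.
From mathcomp Require Import all_boot all_order all_algebra.
From mathcomp Require Import boolp classical_sets zify ring.
Set Implicit Arguments.
Unset Strict Implicit.
Unset Printing Implicit Defensive.
Local Open Scope ring_scope.
Import GRing.Theory.

Section Ext.
Variables (K : fieldType) (H : lmodType K).
Local Open Scope classical_set_scope.
Local Open Scope ring_scope.

Definition mkscalar (f : H -> K) (hf : forall a u v, f (a *: u + v) = a * f u + f v) : {scalar H} :=
  HB.pack f (GRing.isLinear.Build K H K^o *%R f hf).
Definition mklin (f : H -> H) (hf : forall a u v, f (a *: u + v) = a *: f u + f v) : {linear H -> H} :=
  HB.pack f (GRing.isLinear.Build K H H *:%R f hf).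

Definition LF (G : H * K -> Prop) :=
  (forall u c c', G (u, c) -> G (u, c') -> c = c') /\
  (forall a u c v d, G (u, c) -> G (v, d) -> G (a *: u + v, a * c + d)).

Lemma ext_lemma (W : H -> Prop) (W0 : W 0)
  (Wl : forall c u v, W u -> W v -> W (c *: u + v)) x0 :
  ~ W x0 -> exists f : {scalar H}, (forall w, W w -> f w = 0) /\ f x0 = 1.
Proof.
move=> nWx0.
pose G0 : set (H * K) := fun z => exists w t, W w /\ z = (t *: x0 + w, t).
have LF0 : LF G0.
  split.
  - move=> u c c' [w [t [Ww [-> ->]]]] [w' [t' [Ww' [e ->]]]].
    apply/eqP; apply: contraT => ntt.
    have : W ((t - t')^-1 *: (w' - w)).
      have Wd : W (w' - w) by rewrite addrC -scaleN1r; apply: Wl.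
      by rewrite -[_ *: _]addr0; apply: Wl.
    suff -> : (t - t')^-1 *: (w' - w) = x0 by [].
    have e2 : (t - t') *: x0 = w' - w.
      rewrite scalerBl; apply/eqP; rewrite subr_eq.
      by rewrite -[t *: x0](addrK w) e -addrA addrC.
    by rewrite -e2 scalerA mulVf ?scale1r // subr_eq0.
  - move=> a u c v d [w [t [Ww [-> ->]]]] [w' [t' [Ww' [-> ->]]]].
    exists (a *: w + w'), (a * t + t'); split; first exact: Wl.
    congr (_, _); rewrite scalerDr scalerDl scalerA; rewrite !addrA; congr (_ + _).
    by rewrite -!addrA; congr (_ + _); rewrite addrC.
pose P : set (set (H * K)) := fun G => LF (G0 `|` G).
have [A [PA Amax]] : exists A, P A /\ forall B, A `<` B -> ~ P B.
  apply: Zorn_bigcup => F FP Ftot.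
  pose U := G0 `|` \bigcup_(X in F) X.
  have two : forall z1 z2, U z1 -> U z2 -> (G0 z1 /\ G0 z2) \/
      exists X, F X /\ (G0 `|` X) z1 /\ (G0 `|` X) z2.
    move=> z1 z2 [h1|[X FX h1]] [h2|[Y FY h2]].
    - by left.
    - by right; exists Y; split => //; split; [left|right].
    - by right; exists X; split => //; split; [right|left].
    - right; have [XY|YX] := Ftot X Y FX FY.
      + by exists Y; split => //; split; right => //; apply: XY.
      + by exists X; split => //; split; right => //; apply: YX.
  have sub : forall X, F X -> G0 `|` X `<=` U.
    by move=> X FX z [h|h]; [left|right; exists X].
  split.
  - move=> u c c' h1 h2; have [[g1 g2]|[X [FX [g1 g2]]]] := two _ _ h1 h2.
    + exact: LF0.1 g1 g2.
    + exact: (FP X FX).1 g1 g2.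
  - move=> a u c v d h1 h2; have [[g1 g2]|[X [FX [g1 g2]]]] := two _ _ h1 h2.
    + by left; exact: LF0.2 g1 g2.
    + by apply: (sub X FX); exact: (FP X FX).2 _ _ _ _ _ g1 g2.
pose G1 := G0 `|` A.
have G1zero : G1 (0, 0) by left; exists 0, 0; split => //; rewrite scale0r addr0.
have tot : forall y, exists c, G1 (y, c).
  move=> y; apply: contrapT => ny.
  pose B : set (H * K) := fun z => exists u c t, G1 (u, c) /\ z = (t *: y + u, c).
  have G1B : G1 `<=` B by move=> [u c] h; exists u, c, 0; rewrite scale0r add0r.
  apply: (Amax B).
    split; first by move=> z h; apply: G1B; right.
    move=> BA; have : A (y, 0) by apply: BA; exists 0, 0, 1; rewrite scale1r addr0.
    by move=> h; apply: ny; exists 0; right.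
  rewrite /P; have -> : G0 `|` B = B.
    by rewrite predeqE => z; split; [case=> //; move=> h; apply: G1B; left|right].
  split.
  - move=> u c c' [u1 [c1 [t1 [h1 [-> ->]]]]] [u2 [c2 [t2 [h2 [e ->]]]]].
    have [tt|ntt] := eqVneq t1 t2.
      by subst t2; move/addrI: e => eu; subst u2; exact: PA.1 _ _ _ h1 h2.
    exfalso; apply: ny.
    have h3 : G1 (-1 *: u1 + u2, -1 * c1 + c2) by exact: PA.2 _ _ _ _ _ h1 h2.
    have h4 := PA.2 (t1 - t2)^-1 _ _ _ _ h3 G1zero.
    exists ((t1 - t2)^-1 * (-1 * c1 + c2) + 0).
    suff <- : (t1 - t2)^-1 *: (-1 *: u1 + u2) + 0 = y by [].
    have e2 : (t1 - t2) *: y = -1 *: u1 + u2.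
      rewrite scaleN1r scalerBl; apply/eqP; rewrite subr_eq.
      by rewrite -[t1 *: y](addrK u1) e [_ - u1]addrC addrA addrAC.
    by rewrite addr0 -e2 scalerA mulVf ?scale1r // subr_eq0.
  - move=> a u c v d [u1 [c1 [t1 [h1 [-> ->]]]]] [u2 [c2 [t2 [h2 [-> ->]]]]].
    exists (a *: u1 + u2), (a * c1 + c2), (a * t1 + t2); split.
      exact: PA.2 _ _ _ _ _ h1 h2.
    congr (_, _); rewrite scalerDr scalerDl scalerA !addrA; congr (_ + _).
    by rewrite -!addrA; congr (_ + _); rewrite addrC.
pose f y := proj1_sig (cid (tot y)).
have fP y : G1 (y, f y) by rewrite /f; case: cid.
have fl : forall a u v, f (a *: u + v) = a * f u + f v.
  by move=> a u v; apply: PA.1 (fP _) (PA.2 _ _ _ _ _ (fP u) (fP v)).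
exists (mkscalar fl); split.
  move=> w Ww /=; apply: PA.1 (fP w) _; left; exists w, 0; split => //.
  by rewrite scale0r add0r.
rewrite /=; apply: PA.1 (fP x0) _; left; exists 0, 1; split => //.
by rewrite scale1r addr0.
Qed.


Lemma sep x : (forall f : {scalar H}, f x = 0) -> x = 0.
Proof.
move=> hx; apply: contrapT => nx.
have Wl : forall c (u v : H), u = 0 -> v = 0 -> c *: u + v = 0.
  by move=> c u v -> ->; rewrite scaler0 addr0.
have [f [_ f1]] := @ext_lemma (fun v => v = 0) erefl Wl x nx.
by move: (hx f); rewrite f1 => /eqP; rewrite oner_eq0.
Qed.

Lemma sep_eq x y : (forall f : {scalar H}, f x = f y) -> x = y.
Proof.
move=> h; apply/eqP; rewrite -subr_eq0; apply/eqP; apply: sep => f.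
by rewrite linearB /= h subrr.
Qed.

Definition bilinear (beta : H -> H -> K) :=
  (forall a x y z, beta (a *: x + y) z = a * beta x z + beta y z) /\
  (forall a x y z, beta z (a *: x + y) = a * beta z x + beta z y).

Definition bilinH (B : H -> H -> H) :=
  (forall a x y z, B (a *: x + y) z = a *: B x z + B y z) /\
  (forall a x y z, B z (a *: x + y) = a *: B z x + B z y).

Lemma bil0l beta (hb : bilinear beta) z : beta 0 z = 0.
Proof.
have := hb.1 1 0 0 z; rewrite scaler0 addr0 mul1r => h.
by apply: (@addIr _ (beta 0 z)); rewrite add0r -h.
Qed.
Lemma bil0r beta (hb : bilinear beta) z : beta z 0 = 0.
Proof.
have := hb.2 1 0 0 z; rewrite scaler0 addr0 mul1r => h.
by apply: (@addIr _ (beta z 0)); rewrite add0r -h.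
Qed.
Lemma bilZl beta (hb : bilinear beta) c x z : beta (c *: x) z = c * beta x z.
Proof. by rewrite -[c *: x]addr0 hb.1 bil0l // addr0. Qed.
Lemma bilZr beta (hb : bilinear beta) c x z : beta z (c *: x) = c * beta z x.
Proof. by rewrite -[c *: x]addr0 hb.2 bil0r // addr0. Qed.
Lemma bilDl beta (hb : bilinear beta) x y z : beta (x + y) z = beta x z + beta y z.
Proof. by rewrite -{1}[x]scale1r hb.1 mul1r. Qed.
Lemma bilDr beta (hb : bilinear beta) x y z : beta z (x + y) = beta z x + beta z y.
Proof. by rewrite -{1}[x]scale1r hb.2 mul1r. Qed.
Lemma bil_sumZl beta (hb : bilinear beta) (I : Type) (r : seq I) (c : I -> K) (u : I -> H) v :
  beta (\sum_(i <- r) c i *: u i) v = \sum_(i <- r) c i * beta (u i) v.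
Proof.
elim: r => [|x r IH]; first by rewrite !big_nil bil0l.
by rewrite !big_cons bilDl // bilZl // IH.
Qed.
Lemma bil_sumZr beta (hb : bilinear beta) (I : Type) (r : seq I) (c : I -> K) (u : I -> H) v :
  beta v (\sum_(i <- r) c i *: u i) = \sum_(i <- r) c i * beta v (u i).
Proof.
elim: r => [|x r IH]; first by rewrite !big_nil bil0r.
by rewrite !big_cons bilDr // bilZr // IH.
Qed.

Definition lin1 beta (hb : bilinear beta) v : {scalar H} :=
  mkscalar (fun a x y => hb.1 a x y v).
Definition lin2 beta (hb : bilinear beta) v : {scalar H} :=
  mkscalar (fun a x y => hb.2 a x y v).

Lemma bil_flip beta : bilinear beta -> bilinear (fun u v => beta v u).
Proof. by case=> h1 h2; split => a x y z; [rewrite h2|rewrite h1]. Qed.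

Lemma bil_tens (f g : {scalar H}) : bilinear (fun u v => f u * g v).
Proof.
split=> a x y z; rewrite linearP /=; first by rewrite mulrDl mulrA.
by rewrite mulrDr mulrCA.
Qed.

Lemma bil_comp (phi : {scalar H}) B : bilinH B -> bilinear (fun u v => phi (B u v)).
Proof. by case=> h1 h2; split=> a x y z; rewrite ?h1 ?h2 linearP. Qed.

Definition Bs (beta : H -> H -> K) n (a b : nat -> H) := \sum_(i < n) beta (a i) (b i).

Lemma sum_deltaK m j (F : nat -> K) : (j < m)%N ->
  \sum_(i < m) ((i : nat) == j)%:R * F i = F j.
Proof.
move=> hj; rewrite (bigD1 (Ordinal hj)) //= eqxx mul1r big1 ?addr0 // => i hi.
rewrite (_ : ((i : nat) == j) = false) ?mul0r //; apply/negbTE.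
by apply: contra hi => /eqP e; apply/eqP/val_inj.
Qed.

Lemma sum_deltaH m j (F : nat -> H) : (j < m)%N ->
  \sum_(i < m) ((i : nat) == j)%:R *: F i = F j.
Proof.
move=> hj; rewrite (bigD1 (Ordinal hj)) //= eqxx scale1r big1 ?addr0 // => i hi.
rewrite (_ : ((i : nat) == j) = false) ?scale0r //; apply/negbTE.
by apply: contra hi => /eqP e; apply/eqP/val_inj.
Qed.

Lemma reduce beta (hb : bilinear beta) m (j : 'I_m.+1) (a b : nat -> H) (mu : nat -> K) :
  a j = \sum_(i < m) mu i *: a (bump j i) ->
  Bs beta m.+1 a b =
  Bs beta m (fun i => a (bump j i)) (fun i => b (bump j i) + mu i *: b j).
Proof.
move=> ha; rewrite /Bs (bigD1_ord j) //=.
have -> : beta (a j) (b j) = \sum_(i < m) mu i * beta (a (bump j i)) (b j).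
  by rewrite ha bil_sumZl.
rewrite addrC -big_split /=; apply: eq_bigr => i _.
by rewrite bilDr // bilZr.
Qed.
Definition isol n (a : nat -> H) :=
  forall j, (j < n)%N -> exists f : {scalar H}, forall i, (i < n)%N -> f (a i) = (i == j)%:R.

Lemma span_or_isol m (a : nat -> H) :
  (exists (j : 'I_m.+1) (mu : nat -> K), a j = \sum_(i < m) mu i *: a (bump j i))
  \/ isol m.+1 a.
Proof.
case: (pselect (exists (j : 'I_m.+1) (mu : nat -> K), a j = \sum_(i < m) mu i *: a (bump j i))) => [h|h]; first by left.
right => j hj.
pose W := fun v => exists mu : nat -> K, v = \sum_(i < m) mu i *: a (bump j i).
have W0 : W 0 by exists (fun=> 0); rewrite big1 // => i _; rewrite scale0r.
have Wl : forall c u v, W u -> W v -> W (c *: u + v).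
  move=> c u v [mu ->] [nu ->]; exists (fun i => c * mu i + nu i).
  rewrite scaler_sumr -big_split /=; apply: eq_bigr => i _.
  by rewrite scalerA scalerDl.
have nW : ~ W (a j).
  by move=> [mu e]; apply: h; exists (Ordinal hj), mu.
have [f [fW fj]] := ext_lemma W0 Wl nW.
exists f => i hi; have [->|nij] := eqVneq i j; first by [].
apply: fW.
have hu : (unbump j i < m)%N.
  move: hi nij hj; rewrite /unbump; case: ltnP => /= h1 h2 h3 h4; lia.
exists (fun k => (k == unbump j i)%:R).
by rewrite /= (sum_deltaH (fun k => a (bump j k))) // unbumpKcond (negbTE nij).
Qed.

Lemma normal_form n (a b : nat -> H) : exists m (a' b' : nat -> H),
  (forall beta, bilinear beta -> Bs beta n a b = Bs beta m a' b') /\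
  isol m a' /\ isol m b'.
Proof.
elim: n a b => [|m IH] a b.
  by exists 0%N, a, b; split => //; split => j.
have [[j [mu hj]]|isa] := span_or_isol m a.
  have [k [a' [b' [hB [i1 i2]]]]] := IH (fun i => a (bump j i)) (fun i => b (bump j i) + mu i *: b j).
  exists k, a', b'; split => // beta hb; rewrite -hB // (reduce hb _ hj) //.
have [[j [mu hj]]|isb] := span_or_isol m b.
  have [k [a' [b' [hB [i1 i2]]]]] := IH (fun i => a (bump j i) + mu i *: a j) (fun i => b (bump j i)).
  exists k, a', b'; split => // beta hb; rewrite -hB //.
  exact: (reduce (bil_flip hb) _ hj).
by exists m.+1, a, b.
Qed.

Lemma zero_rep n (a b : nat -> H) :
  (forall f g : {scalar H}, Bs (fun u v => f u * g v) n a b = 0) ->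
  forall beta, bilinear beta -> Bs beta n a b = 0.
Proof.
move=> h beta hb.
have [m [a' [b' [hB [ia ib]]]]] := normal_form n a b.
have b0 : forall j, (j < m)%N -> b' j = 0.
  move=> j hj; have [f hf] := ia j hj; apply: sep => g.
  have := h f g; rewrite (hB _ (bil_tens f g)) /Bs.
  rewrite (eq_bigr (fun i : 'I_m => (i == j :> nat)%:R * g (b' i))); last first.
    by move=> i _; rewrite hf.
  by rewrite (sum_deltaK (fun i => g (b' i))).
rewrite hB // /Bs big1 // => i _; by rewrite b0 // bil0r.
Qed.

Definition LB (beta : H -> H -> K) (s : seq (H * H)) := \sum_(p <- s) beta p.1 p.2.

Lemma LB_rep beta s : LB beta s =
  Bs beta (size s) (fun i => (nth (0,0) s i).1) (fun i => (nth (0,0) s i).2).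
Proof. by rewrite /LB (big_nth (0,0)) big_mkord. Qed.

Lemma transfer s t :
  (forall f g : {scalar H}, LB (fun u v => f u * g v) s = LB (fun u v => f u * g v) t) ->
  forall beta, bilinear beta -> LB beta s = LB beta t.
Proof.
move=> h beta hb.
pose u := s ++ [seq (- p.1, p.2) | p <- t].
have LBu : forall gam, bilinear gam -> LB gam u = LB gam s - LB gam t.
  move=> gam hg; rewrite /LB big_cat big_map /= -sumrN; congr (_ + _).
  by apply: eq_bigr => p _; rewrite -scaleN1r bilZl // mulN1r.
apply/eqP; rewrite -subr_eq0 -LBu // LB_rep; apply/eqP; apply: zero_rep => // f g.
by rewrite -LB_rep LBu ?h ?subrr //; exact: bil_tens.
Qed.

Lemma normal_list s : exists m (a' b' : nat -> H),
  (forall beta, bilinear beta -> LB beta s = Bs beta m a' b') /\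
  isol m a' /\ isol m b'.
Proof.
have [m [a' [b' [hB hi]]]] := normal_form (size s) (fun i => (nth (0,0) s i).1) (fun i => (nth (0,0) s i).2).
by exists m, a', b'; split => // beta hb; rewrite LB_rep hB.
Qed.

Definition LBH (B : H -> H -> H) (s : seq (H * H)) := \sum_(p <- s) B p.1 p.2.

Lemma transferH s t :
  (forall f g : {scalar H}, LB (fun u v => f u * g v) s = LB (fun u v => f u * g v) t) ->
  forall B, bilinH B -> LBH B s = LBH B t.
Proof.
move=> h B hB; apply: sep_eq => phi.
rewrite /LBH !linear_sum; apply: (transfer h (bil_comp phi hB)).
Qed.

End Ext.

Section Moor2.
Variables (K : fieldType) (H : lmodType K) (pr : nat -> {linear H -> H})
  (prec : H -> H -> H) (Delta : H -> seq (H * H)).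
Hypothesis hM : moor_bialgebra pr prec Delta.

Definition ev2 (f g : {scalar H}) s := LB (fun u v => f u * g v) s.

Lemma tens2_eval (fs : nat -> {scalar H}) s : tens_eval fs (tens2 s) = \sum_(p <- s) fs 0%N p.1 * fs 1%N p.2.
Proof.
rewrite /tens_eval /tens2 big_map; apply: eq_bigr => p _.
by rewrite !big_ord_recr big_ord0 /= mul1r.
Qed.

Definition fs2 (f g : {scalar H}) := fun i : nat => if i == 0%N then f else g.
Definition fs3 (f g h : {scalar H}) := fun i : nat => if i == 0%N then f else if i == 1%N then g else h.

Lemma te2 s t : tensor_eq (tens2 s) (tens2 t) <-> forall f g, ev2 f g s = ev2 f g t.
Proof.
split=> h.
  move=> f g; have := h (fs2 f g); rewrite !tens2_eval.
  by [].
by move=> fs; rewrite !tens2_eval; apply: h.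
Qed.

Lemma ev2_nil f g : ev2 f g [::] = 0.
Proof. by rewrite /ev2 /LB big_nil. Qed.

Lemma primE x : primitive Delta x <-> forall f g, ev2 f g (Delta x) = 0.
Proof.
rewrite /primitive (_ : [::] = tens2 [::]) // te2.
by split=> h f g; rewrite h ev2_nil.
Qed.

Lemma tens3_eval (fs : nat -> {scalar H}) (s : seq (H * H)) (r : H * H -> seq (H * H)) (u v w : H * H -> H * H -> H) :
  tens_eval fs [seq [:: u p q; v p q; w p q] | p <- s, q <- r p] =
  \sum_(p <- s) \sum_(q <- r p) fs 0%N (u p q) * fs 1%N (v p q) * fs 2%N (w p q).
Proof.
rewrite /tens_eval big_allpairs_dep; apply: eq_bigr => p _; apply: eq_bigr => q _.
by rewrite !big_ord_recr big_ord0 /= mul1r.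
Qed.

Lemma DL a x y f g :
  ev2 f g (Delta (a *: x + y)) = a * ev2 f g (Delta x) + ev2 f g (Delta y).
Proof.
case: hM => _ _ hL _.
rewrite /ev2 /LB.
have -> : \sum_(p <- Delta (a *: x + y)) f p.1 * g p.2 =
  tens_eval (fs2 f g) (tens2 (Delta (a *: x + y))) by rewrite tens2_eval.
rewrite hL /tens_eval big_cat !big_map /= mulr_sumr; congr (_ + _); apply: eq_bigr => p _.
  by rewrite !big_ord_recr big_ord0 /= mul1r linearZ /= mulrA.
by rewrite !big_ord_recr big_ord0 /= mul1r.
Qed.

Lemma C1 x (f g h : {scalar H}) :
  \sum_(p <- Delta x) \sum_(q <- Delta p.2) f p.1 * g q.1 * h q.2 = 0.
Proof.
case: hM => _ _ _ [hc1 _ _].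
have := hc1 x (fs3 f g h); rewrite /id_delta_delta.
rewrite (tens3_eval _ _ (fun p => Delta p.2) (fun p q => p.1) (fun p q => q.1) (fun p q => q.2)).
by rewrite /tens_eval big_nil.
Qed.

Lemma C2 x (f g h : {scalar H}) :
  \sum_(p <- Delta x) \sum_(q <- Delta p.1) f q.1 * g q.2 * h p.2 =
  \sum_(p <- Delta x) \sum_(q <- Delta p.1) f q.1 * g p.2 * h q.2.
Proof.
case: hM => _ _ _ [_ hc2 _].
have := hc2 x (fs3 f g h); rewrite /delta_id_delta /flip_delta_id_delta.
rewrite (tens3_eval _ _ (fun p => Delta p.1) (fun p q => q.1) (fun p q => q.2) (fun p q => p.2)).
by rewrite (tens3_eval _ _ (fun p => Delta p.1) (fun p q => q.1) (fun p q => p.2) (fun p q => q.2)).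
Qed.

Lemma LZ x y (f g : {scalar H}) : ev2 f g (Delta (prec x y)) =
  f x * g (pr 1%N y) + \sum_(p <- Delta x) f (prec p.1 y) * g p.2.
Proof.
case: hM => _ _ _ [_ _ hl].
rewrite /ev2 /LB.
have -> : \sum_(p <- Delta (prec x y)) f p.1 * g p.2 =
  tens_eval (fs2 f g) (tens2 (Delta (prec x y))) by rewrite tens2_eval.
rewrite hl /tens_eval big_cat big_map /=.
rewrite big_seq1 !big_ord_recr big_ord0 /= mul1r; congr (_ + _).
by apply: eq_bigr => p _; rewrite !big_ord_recr big_ord0 /= mul1r.
Qed.


Lemma prec_bil : bilinH prec.
Proof. by case: hM => _ [h1 h2 _ _ _] _ _; split. Qed.

Lemma LB_scale (beta : H -> H -> K) (hb : bilinear beta) a s :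
  LB beta [seq (a *: p.1, p.2) | p <- s] = a * LB beta s.
Proof. by rewrite /LB big_map mulr_sumr; apply: eq_bigr => p _; rewrite bilZl. Qed.

Lemma LB_cat (beta : H -> H -> K) (s t : seq (H * H)) : LB beta (s ++ t) = LB beta s + LB beta t.
Proof. by rewrite /LB big_cat. Qed.

Lemma bilH0l (B : H -> H -> H) (hB : bilinH B) z : B 0 z = 0.
Proof.
have := hB.1 1 0 0 z; rewrite scaler0 addr0 scale1r => h.
by apply: (@addIr _ (B 0 z)); rewrite add0r -h.
Qed.
Lemma bilH0r (B : H -> H -> H) (hB : bilinH B) z : B z 0 = 0.
Proof.
have := hB.2 1 0 0 z; rewrite scaler0 addr0 scale1r => h.
by apply: (@addIr _ (B z 0)); rewrite add0r -h.
Qed.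
Lemma bilHZl (B : H -> H -> H) (hB : bilinH B) c x z : B (c *: x) z = c *: B x z.
Proof. by rewrite -[c *: x]addr0 hB.1 bilH0l // addr0. Qed.
Lemma bilHZr (B : H -> H -> H) (hB : bilinH B) c x z : B z (c *: x) = c *: B z x.
Proof. by rewrite -[c *: x]addr0 hB.2 bilH0r // addr0. Qed.
Lemma bilHDl (B : H -> H -> H) (hB : bilinH B) x y z : B (x + y) z = B x z + B y z.
Proof. by rewrite -{1}[x]scale1r hB.1 scale1r. Qed.
Lemma bilHDr (B : H -> H -> H) (hB : bilinH B) x y z : B z (x + y) = B z x + B z y.
Proof. by rewrite -{1}[x]scale1r hB.2 scale1r. Qed.
Lemma bilH_sumZl (B : H -> H -> H) (hB : bilinH B) (I : Type) (r : seq I) (c : I -> K) (u : I -> H) v :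
  B (\sum_(i <- r) c i *: u i) v = \sum_(i <- r) c i *: B (u i) v.
Proof.
elim: r => [|x r IH]; first by rewrite !big_nil bilH0l.
by rewrite !big_cons bilHDl // bilHZl // IH.
Qed.
Lemma bilH_sumZr (B : H -> H -> H) (hB : bilinH B) (I : Type) (r : seq I) (c : I -> K) (u : I -> H) v :
  B v (\sum_(i <- r) c i *: u i) = \sum_(i <- r) c i *: B v (u i).
Proof.
elim: r => [|x r IH]; first by rewrite !big_nil bilH0r.
by rewrite !big_cons bilHDr // bilHZr // IH.
Qed.

Lemma LBH_scale (B : H -> H -> H) (hB : bilinH B) a s :
  LBH B [seq (a *: p.1, p.2) | p <- s] = a *: LBH B s.
Proof.
rewrite /LBH big_map scaler_sumr; apply: eq_bigr => p _.
by rewrite bilHZl.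
Qed.

Lemma LBH_cat (B : H -> H -> H) (s t : seq (H * H)) : LBH B (s ++ t) = LBH B s + LBH B t.
Proof. by rewrite /LBH big_cat. Qed.

Lemma E2_lin a x y (f g : {scalar H}) :
  LB (fun u v => f u * g v) (Delta (a *: x + y)) =
  LB (fun u v => f u * g v) ([seq (a *: p.1, p.2) | p <- Delta x] ++ Delta y).
Proof.
rewrite LB_cat LB_scale; last exact: bil_tens.
by have := DL a x y f g; rewrite /ev2.
Qed.

Lemma LBlin (beta : H -> H -> K) (hb : bilinear beta) a x y :
  LB beta (Delta (a *: x + y)) = a * LB beta (Delta x) + LB beta (Delta y).
Proof. by rewrite (transfer (@E2_lin a x y) hb) LB_cat LB_scale. Qed.

Lemma LBHlin (B : H -> H -> H) (hB : bilinH B) a x y :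
  LBH B (Delta (a *: x + y)) = a *: LBH B (Delta x) + LBH B (Delta y).
Proof. by rewrite (transferH (@E2_lin a x y) hB) LBH_cat LBH_scale. Qed.

Definition Dsc (beta : H -> H -> K) (hb : bilinear beta) : {scalar H} := mkscalar (LBlin hb).
Definition DH (B : H -> H -> H) (hB : bilinH B) : {linear H -> H} := mklin (LBHlin hB).

Lemma bilL (g : {scalar H}) : bilinH (fun u v => g v *: u).
Proof.
split=> a x y z; first by rewrite scalerDr !scalerA mulrC.
by rewrite linearP /= scalerDl scalerA.
Qed.

Lemma bilR (f : {scalar H}) : bilinH (fun u v => f u *: v).
Proof.
split=> a x y z; first by rewrite linearP /= scalerDl scalerA.
by rewrite scalerDr !scalerA mulrC.
Qed.

Definition Lg g := DH (bilL g).
Definition Rf f := DH (bilR f).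
Definition N := DH prec_bil.

Lemma LgE g x : Lg g x = \sum_(p <- Delta x) g p.2 *: p.1. Proof. by []. Qed.
Lemma RfE f x : Rf f x = \sum_(p <- Delta x) f p.1 *: p.2. Proof. by []. Qed.
Lemma NE x : N x = \sum_(p <- Delta x) prec p.1 p.2. Proof. by []. Qed.

Lemma phiL (phi g : {scalar H}) x : phi (Lg g x) = ev2 phi g (Delta x).
Proof.
rewrite LgE linear_sum /ev2 /LB; apply: eq_bigr => p _.
by rewrite linearZ /= mulrC.
Qed.

Lemma phiR (phi f : {scalar H}) x : phi (Rf f x) = ev2 f phi (Delta x).
Proof.
rewrite RfE linear_sum /ev2 /LB; apply: eq_bigr => p _.
by rewrite linearZ.
Qed.

Lemma primL x : primitive Delta x <-> forall g, Lg g x = 0.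
Proof.
rewrite primE; split=> h.
  by move=> g; apply: sep => phi; rewrite phiL h.
by move=> f g; rewrite -phiL h linear0.
Qed.

Lemma prim_lin a x y : primitive Delta x -> primitive Delta y -> primitive Delta (a *: x + y).
Proof. by rewrite !primE => hx hy f g; rewrite DL hx hy mulr0 addr0. Qed.

Lemma prim0 : primitive Delta 0.
Proof. by rewrite primE => f g; rewrite -phiL linear0 linear0. Qed.

Lemma primN x : primitive Delta x -> N x = 0.
Proof.
move=> /primE hx; rewrite NE -/(LBH prec (Delta x)).
rewrite (@transferH _ _ _ [::] _ _ prec_bil) ?/LBH ?big_nil //.
by move=> f g; have := hx f g; rewrite /ev2 => ->; rewrite /LB big_nil.
Qed.


Hypothesis hC : connected pr Delta.

Lemma Rf_prim f x : primitive Delta (Rf f x).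
Proof.
rewrite primE => g h.
transitivity (Dsc (bil_tens g h) (Rf f x)); first by [].
rewrite RfE linear_sum; rewrite -[RHS](C1 x f g h); apply: eq_bigr => p _.
rewrite linearZ /= /LB mulr_sumr; apply: eq_bigr => q _; by rewrite mulrA.
Qed.

Lemma H1 f x : pr 1%N (Rf f x) = Rf f x.
Proof. exact: hC.1 _ (Rf_prim f x). Qed.

Lemma L1 g x y : Lg g (prec x y) = g (pr 1%N y) *: x + prec (Lg g x) y.
Proof.
apply: sep_eq => phi; rewrite phiL LZ linearD linearZ LgE (bilH_sumZl prec_bil) linear_sum /=.
rewrite mulrC; congr (_ + _); apply: eq_bigr => p _.
by rewrite linearZ /= mulrC.
Qed.

Lemma LgN g x : Lg g (N x) = Lg g x + N (Lg g x).
Proof.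
rewrite {1}NE linear_sum.
rewrite (eq_bigr (fun p => g (pr 1%N p.2) *: p.1 + prec (Lg g p.1) p.2)); last first.
  by move=> p _; rewrite L1.
rewrite big_split /=; congr (_ + _).
  apply: sep_eq => phi; rewrite linear_sum phiL /ev2 /LB.
  transitivity (\sum_(p <- Delta x) phi p.1 * g (pr 1%N p.2)).
    by apply: eq_bigr => p _; rewrite linearZ /= mulrC.
  transitivity (g (pr 1%N (Rf phi x))).
    by rewrite RfE !linear_sum; apply: eq_bigr => p _; rewrite !linearZ.
  by rewrite H1 RfE linear_sum; apply: eq_bigr => p _; rewrite linearZ.
apply: sep_eq => phi.
pose s1 := [seq (q.1, g p.2 *: q.2) | p <- Delta x, q <- Delta p.1].
pose s2 := [seq (q.1, g q.2 *: p.2) | p <- Delta x, q <- Delta p.1].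
have T : LB (fun u v => phi (prec u v)) s1 = LB (fun u v => phi (prec u v)) s2.
  apply: transfer; last exact: (bil_comp phi prec_bil).
  move=> f1 f2; rewrite /LB !big_allpairs_dep /=.
  transitivity (\sum_(p <- Delta x) \sum_(q <- Delta p.1) f1 q.1 * f2 q.2 * g p.2).
    by apply: eq_bigr => p _; apply: eq_bigr => q _; rewrite linearZ /=; ring.
  rewrite C2; apply: eq_bigr => p _; apply: eq_bigr => q _; rewrite linearZ /=; ring.
transitivity (LB (fun u v => phi (prec u v)) s2).
  rewrite /LB big_allpairs_dep linear_sum; apply: eq_bigr => p _ /=.
  rewrite /LBH (bilH_sumZl prec_bil) linear_sum; apply: eq_bigr => q _.
  by rewrite (bilHZr prec_bil) !linearZ.
rewrite -T; change (LB (fun u v : H => phi (prec u v)) s1 = phi (N (Lg g x))).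
rewrite /LB big_allpairs_dep LgE (linear_sum N) linear_sum; apply: eq_bigr => p _.
rewrite [X in phi X]linearZ linearZ NE linear_sum /= mulr_sumr; apply: eq_bigr => q _.
by rewrite (bilHZr prec_bil) linearZ.
Qed.


Fixpoint Q (a r : nat) (x : H) : H :=
  if r is r'.+1 then N (Q a.+1 r' x) - a%:R *: Q a.+1 r' x else x.

Lemma QS a r x : Q a r.+1 x = N (Q a.+1 r x) - a%:R *: Q a.+1 r x.
Proof. by []. Qed.

Lemma Qlin r : forall a c x y, Q a r (c *: x + y) = c *: Q a r x + Q a r y.
Proof.
elim: r => [//|r IH] a c x y; rewrite !QS IH linearP.
rewrite scalerDr scalerBr !scalerA mulrC.
by rewrite opprD addrACA.
Qed.

Lemma QL g r : forall a x, Lg g (Q a.+1 r x) = Q a r (Lg g x).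
Proof.
elim: r => [//|r IH] a x; rewrite !QS linearB linearZZ LgN IH.
set z := Q a.+1 r (Lg g x).
rewrite [(a.+1)%:R]mulrSr scalerDl scale1r opprD.
by rewrite [z + _]addrC -addrA [- _ - z]addrC addNKr.
Qed.

Fixpoint F (r : nat) (x : H) : Prop :=
  if r is r'.+1 then forall g, F r' (Lg g x) else x = 0.

Lemma F0 r : F r 0.
Proof. by elim: r => [//|r IH] g; rewrite linear0. Qed.

Lemma Flin r : forall c x y, F r x -> F r y -> F r (c *: x + y).
Proof.
elim: r => [|r IH] c x y; first by move=> /= -> ->; rewrite scaler0 addr0.
by move=> hx hy g; rewrite linearP; apply: IH; [apply: hx|apply: hy].
Qed.

Lemma FN r : forall x, F r x -> F r (N x).
Proof.
elim: r => [x ->|r IH x hx g]; first by rewrite linear0.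
by have := Flin 1 (hx g) (IH _ (hx g)); rewrite scale1r -LgN.
Qed.

Lemma FQ' r m : forall a x, F r x -> F r (Q a m x).
Proof.
elim: m => [//|m IH] a x hx; rewrite QS addrC -scaleNr; apply: Flin; first exact: IH.
by apply: FN; apply: IH.
Qed.

Lemma FQ r : forall x, F r x -> Q 0 r x = 0.
Proof.
elim: r => [//|r IH] x hx; rewrite QS mulr0n scale0r subr0.
by apply: primN; apply/primL => g; rewrite QL; apply: IH; apply: hx.
Qed.

Lemma Qeig lam u : N u = lam *: u ->
  forall m a, Q a m u = (\prod_(k < m) (lam - (a + k)%:R)) *: u.
Proof.
move=> hN; elim=> [|m IH] a; first by rewrite big_ord0 scale1r.
rewrite QS IH [X in X - _]linearZ hN big_ord_recl /= !scalerA -scalerBl.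
congr (_ *: u).
have -> : \prod_(i < m) (lam - (a + bump 0 i)%:R) = \prod_(k < m) (lam - (a.+1 + k)%:R).
  by apply: eq_bigr => i _; rewrite /bump leq0n add1n addnS.
by rewrite addn0; ring.
Qed.

Hypothesis hchar : [pchar K] =i pred0.

Lemma natr_neq0 n : (0 < n)%N -> (n%:R : K) != 0.
Proof. by move=> hn; rewrite ((pcharf0P _).1 hchar) -lt0n. Qed.

Lemma kerN r y : F r.+1 y -> N y = 0 -> primitive Delta y.
Proof.
move=> hy hN; apply/primL => g.
set u := Lg g y; have Fu : F r u := hy g.
have Nu : N u = (-1) *: u.
  have := LgN g y; rewrite hN linear0 -/u => /esym/eqP; rewrite addrC addr_eq0 => /eqP ->.
  by rewrite scaleN1r.
have := FQ Fu; rewrite (Qeig Nu) => /eqP; rewrite scaler_eq0 => /orP[|/eqP //].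
move/prodf_neq0 => h; exfalso; apply: h => i _.
rewrite (_ : -1 - (0 + i)%:R = - (i.+1)%:R) ?oppr_eq0 ?natr_neq0 //.
by rewrite add0n -addn1 natrD opprD addrC.
Qed.

Lemma Qdecomp R m : forall a, (0 < a)%N -> forall y, F R y ->
  exists c w, c != 0 /\ F R w /\ Q a m y = c *: y + N w.
Proof.
elim: m => [|m IH] a ha y hy.
  by exists 1, 0; split; [exact: oner_neq0|split; [exact: F0|rewrite linear0 addr0 scale1r]].
have [c' [w' [hc' [hw' e]]]] := IH a.+1 isT y hy.
exists (- (a%:R * c')), (Q a.+1 m y - a%:R *: w'); split.
  by rewrite oppr_eq0 mulf_neq0 // natr_neq0.
split; first by rewrite addrC -scaleNr; apply: Flin => //; exact: FQ'.
rewrite QS [in X in _ - X]e scalerDr scalerA linearB linearZZ opprD scaleNr.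
by rewrite addrCA.
Qed.

Lemma gen_sum (I : Type) (r : seq I) (Fn : I -> H) :
  (forall i, moor_gen prec (primitive Delta) (Fn i)) ->
  moor_gen prec (primitive Delta) (\sum_(i <- r) Fn i).
Proof.
move=> h; elim: r => [|i r IH]; first by rewrite big_nil; exact: mg_zero.
by rewrite big_cons -[Fn i]scale1r; apply: mg_lin.
Qed.

Lemma Ngen r (IHr : forall x, F r x -> moor_gen prec (primitive Delta) x) w :
  F r.+1 w -> moor_gen prec (primitive Delta) (N w).
Proof.
move=> hw.
have [m [a' [b' [hB [ia ib]]]]] := normal_list (Delta w).
have eN : N w = \sum_(i < m) prec (a' i) (b' i).
  apply: sep_eq => phi; rewrite NE !linear_sum.
  by have := hB _ (bil_comp phi prec_bil); rewrite /LB /Bs.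
rewrite eN; apply: gen_sum => i; apply: mg_prec.
  have [g hg] := ib i (ltn_ord i).
  have -> : a' i = Lg g w.
    apply: sep_eq => phi; rewrite phiL /ev2 (hB _ (bil_tens _ _)) /Bs.
    rewrite (eq_bigr (fun k : 'I_m => (k == i :> nat)%:R * phi (a' k))).
      by rewrite (sum_deltaK (fun k => phi (a' k))).
    by move=> k _; rewrite hg // mulrC.
  by apply: IHr; apply: hw.
have [f hf] := ia i (ltn_ord i).
have -> : b' i = Rf f w.
  apply: sep_eq => phi; rewrite phiR /ev2 (hB _ (bil_tens _ _)) /Bs.
  rewrite (eq_bigr (fun k : 'I_m => (k == i :> nat)%:R * phi (b' k))).
    by rewrite (sum_deltaK (fun k => phi (b' k))).
  by move=> k _; rewrite hf.
by apply: mg_base; exact: Rf_prim.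
Qed.

Lemma gen_F r : forall x, F r x -> moor_gen prec (primitive Delta) x.
Proof.
elim: r => [x ->|r IH x hx]; first exact: mg_zero.
have hQ := FQ hx; rewrite QS mulr0n scale0r subr0 in hQ.
have [c [w [hc [hw e]]]] := @Qdecomp r.+1 r 1 isT x hx.
have p0 : primitive Delta (Q 1 r x) by apply: (kerN (FQ' _ _ hx)).
have -> : x = c^-1 *: Q 1 r x + ((- c^-1) *: N w + 0).
  by rewrite addr0 e scalerDr scalerA mulVf // scale1r scaleNr addrK.
apply: mg_lin; first exact: mg_base.
by apply: mg_lin; [exact: (Ngen IH hw)|exact: mg_zero].
Qed.


Lemma iterS r x : iter_delta Delta r.+1 x =
  [seq q.1 :: q.2 :: behead t | t <- iter_delta Delta r x, q <- Delta (head 0 t)].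
Proof. by []. Qed.

Lemma iter_size r : forall x t, t \in iter_delta Delta r x -> size t = r.+1.
Proof.
elim: r => [x t|r IH x t]; first by rewrite inE => /eqP ->.
rewrite iterS => /allpairsPdep [t' [q [ht' _ ->]]] /=.
by rewrite size_behead (IH _ _ ht').
Qed.

Lemma iter_sum r : forall x (Phi : seq H -> K),
  \sum_(t <- iter_delta Delta r.+1 x) Phi t =
  \sum_(p <- Delta x) \sum_(u <- iter_delta Delta r p.1) Phi (rcons u p.2).
Proof.
elim: r => [|r IH] x Phi.
  rewrite iterS big_allpairs_dep big_seq1; apply: eq_bigr => p _.
  by rewrite big_seq1.
rewrite iterS big_allpairs_dep IH; apply: eq_bigr => p _.
rewrite iterS big_allpairs_dep big_seq_cond [RHS]big_seq_cond.
apply: eq_bigr => u /andP [hu _].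
by case: u hu => [|a u] hu; [have := iter_size hu|].
Qed.

Definition T (fs : nat -> {scalar H}) r x := tens_eval fs (iter_delta Delta r x).

Lemma T0 (fs : nat -> {scalar H}) x : T fs 0 x = fs 0%N x.
Proof. by rewrite /T /tens_eval big_seq1 big_ord_recr big_ord0 /= mul1r. Qed.

Lemma TS (fs : nat -> {scalar H}) r x :
  T fs r.+1 x = \sum_(p <- Delta x) T fs r p.1 * fs r.+1 p.2.
Proof.
rewrite /T /tens_eval iter_sum; apply: eq_bigr => p _; rewrite big_distrl /=.
rewrite big_seq_cond [RHS]big_seq_cond; apply: eq_bigr => u /andP [hu _].
have su := iter_size hu.
rewrite size_rcons su big_ord_recr /= nth_rcons su ltnn eqxx; congr (_ * _).
by apply: eq_bigr => i _; rewrite nth_rcons su /= ltn_ord.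
Qed.

Lemma Tlin (fs : nat -> {scalar H}) r : forall a x y, T fs r (a *: x + y) = a * T fs r x + T fs r y.
Proof.
elim: r => [|r IH] a x y; first by rewrite !T0 linearP.
have hb : bilinear (fun u v => T fs r u * fs r.+1 v).
  split=> c u v z; first by rewrite IH mulrDl mulrA.
  by rewrite linearP /= mulrDr mulrCA.
by rewrite !TS; have := LBlin hb a x y; rewrite /LB.
Qed.

Definition Tsc (fs : nat -> {scalar H}) r : {scalar H} := mkscalar (Tlin fs r).

Lemma TSL (fs : nat -> {scalar H}) r x : T fs r.+1 x = T fs r (Lg (fs r.+1) x).
Proof.
rewrite TS; change (T fs r (Lg (fs r.+1) x)) with (Tsc fs r (Lg (fs r.+1) x)).
rewrite LgE linear_sum; apply: eq_bigr => p _.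
by rewrite linearZ /= mulrC.
Qed.

Lemma Text (fs fs' : nat -> {scalar H}) r :
  (forall i y, (i <= r)%N -> fs i y = fs' i y) -> forall x, T fs r x = T fs' r x.
Proof.
elim: r => [|r IH] h x; first by rewrite !T0 h.
rewrite !TS; apply: eq_bigr => p _; rewrite h // IH // => i y hi.
by apply: h; apply: leqW.
Qed.

Lemma TF r : forall x, (forall fs, T fs r x = 0) <-> F r x.
Proof.
elim: r => [|r IH] x.
  split=> h; first by apply: sep => f; have := h (fun _ => f); rewrite T0.
  by move=> fs; rewrite T0 /= h linear0.
split=> h.
  move=> g; apply: (proj1 (IH (Lg g x))) => fs.
  pose fs' := fun i => if i == r.+1 then g else fs i.
  rewrite (@Text fs fs'); last first.
    move=> i y hi; rewrite /fs' (_ : (i == r.+1) = false) //.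
    by apply/negbTE; rewrite neq_ltn ltnS hi.
  have e : Lg g x = Lg (fs' r.+1) x by rewrite /fs' eqxx.
  by rewrite e -TSL h.
by move=> fs; rewrite TSL; apply: (proj2 (IH (Lg (fs r.+1) x))); apply: h.
Qed.

Lemma connF x : exists r, F r x.
Proof.
have [r _ ht] := hC.2 x; exists r; apply/TF => fs.
by rewrite /T ht /tens_eval big_nil.
Qed.

Lemma pr1_prec x y : pr 1%N (prec x y) = 0.
Proof.
case: hM => [[g1 g2 g3] [p1 p2 p3 p4 p5] _ _].
pose precl z : {linear H -> H} := mklin (fun a u v => p1 a u v z).
pose precr z : {linear H -> H} := mklin (fun a u v => p2 a u v z).
have [n1 ex] := g3 x; have [n2 ey] := g3 y.
rewrite ex ey.
transitivity (pr 1%N (precl (\sum_(q < n2) pr q y) (\sum_(p < n1) pr p x))); first by [].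
rewrite linear_sum linear_sum big1 // => [[p hp]] _ /=.
transitivity (pr 1%N (precr (pr p x) (\sum_(q < n2) pr q y))); first by [].
rewrite linear_sum linear_sum big1 // => [[q hq]] _ /=.
case: p hp => [|p] hp; first by rewrite g2 (bilH0l prec_bil) linear0.
case: q hq => [|q] hq; first by rewrite g2 (bilH0r prec_bil) linear0.
have hx' : homog pr p.+1 (pr p.+1 x) by rewrite /homog g1 eqxx.
have hy' : homog pr q.+1 (pr q.+1 y) by rewrite /homog g1 eqxx.
have hh := p3 _ _ _ _ hx' hy'.
by rewrite -hh g1 addSn addnS.
Qed.

Lemma gen_pr1 x : moor_gen prec (primitive Delta) x -> primitive Delta (pr 1%N x).
Proof.
elim=> [z hz| |a u v _ hu _ hv|u v _ _ _ _].
- by rewrite (hC.1 _ hz).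
- by rewrite linear0; exact: prim0.
- by rewrite linearP; exact: prim_lin.
- by rewrite pr1_prec; exact: prim0.
Qed.

End Moor2.


Theorem lemma4p3 (K : fieldType) (H : lmodType K)
    (pr : nat -> {linear H -> H}) (prec : H -> H -> H)
    (Delta : H -> seq (H * H)) :
  [pchar K] =i pred0 ->
  moor_bialgebra pr prec Delta ->
  connected pr Delta ->
  (forall x, moor_gen prec (primitive Delta) x) /\
  (forall x, primitive Delta x <-> homog pr 1 x).
Proof.
move=> hch hM hC; split.
  move=> x; have [r hr] := connF hM hC x; exact: (gen_F hC hch hr).
move=> x; split; first exact: hC.1.
move=> hx; rewrite -hx; apply: (gen_pr1 hM hC).
have [r hr] := connF hM hC x; exact: (gen_F hC hch hr).
Qed.
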